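(* Let $G=(V,E)$ be an undirected multigraph, $0\le\delta\le1/3$, and $A\subseteq V$. Let $S\subseteq V$ cross $A$ and let $\lambda=w(S,V\setminus S)$. Suppose $w(S\cap A,A\setminus S)\le\lambda/2$ and $S\cap A$ is not $(1-\delta)$-boundary sparse in $A$. Let $X\in\{S\cap A,A\setminus S\}$ satisfy $w(X,V\setminus A)=\min\{w(S\cap A,V\setminus A),w(A\setminus S,V\setminus A)\}$. Then $w(X,V\setminus X)\le(1+\tfrac{3\delta}{4})\lambda$.
   Context: $w(P,Q)$ is the number of edges (with multiplicity) between disjoint sets $P$ and $Q$. $S$ crosses $A$ if $S\cap A$ and $A\setminus S$ are both nonempty. For $C\subseteq V$, a set $U\subsetneq C$ is $(1-\delta)$-boundary sparse in $C$ if $w(U,C\setminus U)<(1-\delta)\min\{w(U,V\setminus C),\,w(C\setminus U,V\setminus C)\}$. *)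

(* Defs.v *)
From HB Require Import structures.
From mathcomp Require Import all_boot all_order all_algebra.
Set Implicit Arguments. Unset Strict Implicit. Unset Printing Implicit Defensive.
Import Order.TTheory GRing.Theory Num.Theory.

(* An undirected multigraph on the finite vertex set T is given by a
   symmetric multiplicity function e : T -> T -> nat
   (e u v = number of edges between u and v). *)
Definition symmetric_mult (T : finType) (e : T -> T -> nat) : Prop :=
  forall u v, e u v = e v u.

Definition wcut (T : finType) (e : T -> T -> nat) (P Q : {set T}) : nat :=
  \sum_(u in P) \sum_(v in Q) e u v.

Definition crosses (T : finType) (S A : {set T}) : Prop :=
  S :&: A != set0 /\ A :\: S != set0.

Definition boundary_sparse (R : realFieldType) (T : finType)
    (e : T -> T -> nat) (delta : R) (C U : {set T}) : Prop :=
  U \proper C /\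
  ((wcut e U (C :\: U))%:R <
     (1 - delta) * Num.min (wcut e U (~: C))%:R (wcut e (C :\: U) (~: C))%:R)%R.

(* Main.v *)
Require Import Defs.
From HB Require Import structures.
From mathcomp Require Import all_boot all_order all_algebra.
From mathcomp Require Import lra.
Import Order.TTheory GRing.Theory Num.Theory.
Local Open Scope ring_scope.

Lemma wcut_split (T : finType) (e : T -> T -> nat) (P Q D : {set T}) :
  wcut e P Q = (wcut e P (Q :&: D) + wcut e P (Q :\: D))%N.
Proof.
rewrite /wcut -big_split /=; apply: eq_bigr => u _; exact: big_setID.
Qed.

Lemma wcut_sym (T : finType) (e : T -> T -> nat) (P Q : {set T}) :
  symmetric_mult e -> wcut e P Q = wcut e Q P.
Proof.
move=> hs; rewrite /wcut exchange_big /=.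
apply: eq_bigr => v _; apply: eq_bigr => u _; exact: hs.
Qed.

Lemma wcut_eqset (T : finType) (e : T -> T -> nat) (P Q Q' : {set T}) :
  Q = Q' -> wcut e P Q = wcut e P Q'.
Proof. by move=> ->. Qed.

Theorem mainTheorem9 (R : realFieldType) (T : finType) (e : T -> T -> nat)
    (delta : R) (A S X : {set T}) :
  symmetric_mult e ->
  0 <= delta -> delta <= 1 / 3 ->
  crosses S A ->
  (wcut e (S :&: A) (A :\: S))%:R <= (wcut e S (~: S))%:R / 2 :> R ->
  ~ boundary_sparse e delta A (S :&: A) ->
  (X = S :&: A \/ X = A :\: S) ->
  wcut e X (~: A) = minn (wcut e (S :&: A) (~: A)) (wcut e (A :\: S) (~: A)) ->
  (wcut e X (~: X))%:R <= (1 + 3 * delta / 4) * (wcut e S (~: S))%:R.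
Proof.
move=> hs d0 d13 [cr1 cr2] hab hns hX hm.
have hprop : S :&: A \proper A.
  rewrite properE subsetIr /=; apply/negP => hsub.
  case/set0Pn: cr2 => x; rewrite inE => /andP [xS xA].
  by move/subsetP: hsub => /(_ x xA); rewrite inE (negbTE xS).
have hXX : wcut e X (~: X) = (wcut e (S :&: A) (A :\: S) + wcut e X (~: A))%N.
  rewrite (@wcut_split _ e X (~: X) A).
  case: hX => ->.
  - congr (_ + _)%N.
      by f_equal; apply/setP => x; rewrite !inE; case: (x \in S); case: (x \in A).
    by f_equal; apply/setP => x; rewrite !inE; case: (x \in S); case: (x \in A).
  - congr (_ + _)%N.
      rewrite wcut_sym //; f_equal.
      by apply/setP => x; rewrite !inE; case: (x \in S); case: (x \in A).
    by f_equal; apply/setP => x; rewrite !inE; case: (x \in S); case: (x \in A).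
have hsp : (1 - delta) * (wcut e X (~: A))%:R <= (wcut e (S :&: A) (A :\: S))%:R :> R.
  rewrite leNgt; apply/negP => hlt; apply: hns; split => //.
  have -> : A :\: (S :&: A) = A :\: S.
    by apply/setP => x; rewrite !inE; case: (x \in S); case: (x \in A).
  rewrite hm in hlt.
  have hmin : Num.min (wcut e (S :&: A) (~: A))%:R (wcut e (A :\: S) (~: A))%:R
          = (minn (wcut e (S :&: A) (~: A)) (wcut e (A :\: S) (~: A)))%:R :> R.
    by rewrite /minn /Num.min ltr_nat; case: ltnP.
  by rewrite hmin.
rewrite hXX natrD.
move: hsp hab.
set p := (wcut e (S :&: A) (A :\: S))%:R : R.
set m := (wcut e X (~: A))%:R : R.
set L := (wcut e S (~: S))%:R : R.
have m0 : 0 <= m by rewrite /m ler0n.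
move=> hsp hab.
have L0 : 0 <= L by rewrite /L ler0n.
have p0 : 0 <= p by rewrite /p ler0n.
have h1 : 0 < 1 - delta by lra.
rewrite -(ler_pM2l h1).
have h2 : 0 <= delta * (1 - 3 * delta) * L.
  apply: mulr_ge0 => //; apply: mulr_ge0 => //; lra.
have h3 : 0 <= delta * (L / 2 - p).
  apply: mulr_ge0 => //; lra.
nra.
Qed.
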